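(* The linear span of $\{(I-S)h_k:k\geq2\}$ is dense in $H^2$.
   Context: $H^2$ is the Hardy space on the open unit disk $\mathbb{D}$ and $S$ the shift operator $Sf(z)=zf(z)$. For $k\geq 2$, $h_k(z)=\frac{1}{1-z}\big(\mathrm{Log}(1-z^k)-\mathrm{Log}(1-z)-\ln k\big)$ with $\mathrm{Log}$ the principal branch, so $(I-S)h_k(z)=\mathrm{Log}(1-z^k)-\mathrm{Log}(1-z)-\ln k$. *)

(* Defs.v *)
From Stdlib Require Import Reals.
Open Scope R_scope.

Definition Cx : Type := (R * R)%type.

Definition RtoC (x : R) : Cx := (x, 0).
Definition C0 : Cx := (0, 0).
Definition C1 : Cx := (1, 0).
Definition Cadd (z w : Cx) : Cx := (fst z + fst w, snd z + snd w).
Definition Copp (z : Cx) : Cx := (- fst z, - snd z).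
Definition Csub (z w : Cx) : Cx := Cadd z (Copp w).
Definition Cmul (z w : Cx) : Cx :=
  (fst z * fst w - snd z * snd w, fst z * snd w + snd z * fst w).
Fixpoint Cpow (z : Cx) (n : nat) : Cx :=
  match n with O => C1 | S m => Cmul z (Cpow z m) end.

Definition Cnorm2 (z : Cx) : R := fst z * fst z + snd z * snd z.
Definition Cmod (z : Cx) : R := sqrt (Cnorm2 z).

(* principal argument in (-pi, pi] (value 0 at z = 0, irrelevant) *)
Definition Arg (z : Cx) : R :=
  let x := fst z in let y := snd z in
  if Rlt_dec 0 x then atan (y / x)
  else if Rlt_dec x 0 then
    (if Rle_dec 0 y then atan (y / x) + PI else atan (y / x) - PI)
  else if Rlt_dec 0 y then PI / 2
  else if Rlt_dec y 0 then - (PI / 2)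
  else 0.

Definition CLog (z : Cx) : Cx := (ln (Cmod z), Arg z).

Definition Cinfinite_sum (f : nat -> Cx) (l : Cx) : Prop :=
  infinite_sum (fun n => fst (f n)) (fst l) /\
  infinite_sum (fun n => snd (f n)) (snd l).

Fixpoint Csum (f : nat -> Cx) (N : nat) : Cx :=
  match N with O => C0 | S m => Cadd (Csum f m) (f m) end.

Definition inD (z : Cx) : Prop := Cnorm2 z < 1.

Definition IminusS_hk (k : nat) (z : Cx) : Cx :=
  Csub (Csub (CLog (Csub C1 (Cpow z k))) (CLog (Csub C1 z))) (RtoC (ln (INR k))).

(* H^2 identified with the Taylor coefficient sequences that are square summable *)
Definition inH2 (a : nat -> Cx) : Prop :=
  exists L, infinite_sum (fun n => Cnorm2 (a n)) L.

Definition taylor_coeffs (f : Cx -> Cx) (b : nat -> Cx) : Prop :=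
  forall z, inD z -> Cinfinite_sum (fun n => Cmul (b n) (Cpow z n)) (f z).

(* Main.v *)
From Pilot Require Import Defs.
From Stdlib Require Import Reals Lia Lra Arith ClassicalEpsilon FunctionalExtensionality.
Open Scope R_scope.

Lemma bounded_cv (u : nat -> R) l : Un_cv u l -> exists M, forall n, Rabs (u n) <= M.
Proof.
  intros H. apply cv_cvabs in H.
  assert (Hc : Cauchy_crit (fun i => Rabs (u i))) by (apply CV_Cauchy; exists (Rabs l); exact H).
  destruct (cauchy_bound _ Hc) as [m Hm]. exists m. intros n. apply Hm. exists n. reflexivity.
Qed.

Lemma succ_divmod (N k : nat) : (k > 0)%nat ->
  ((S N) mod k = 0 /\ S N / k = S (N / k) /\ k * (S N / k) = S N)%nat \/
  ((S N) mod k <> 0 /\ S N / k = N / k)%nat.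
Proof.
  intros Hk.
  pose proof (Nat.div_mod_eq N k) as E. pose proof (Nat.mod_upper_bound N k ltac:(lia)) as B.
  set (q := (N / k)%nat) in *. set (r := (N mod k)%nat) in *.
  destruct (Nat.eq_dec (S r) k) as [Heq|Hne].
  - left. assert (E2 : (S N = k * S q + 0)%nat) by lia.
    rewrite <- (Nat.div_unique _ _ _ _ (ltac:(lia) : (0 < k)%nat) E2).
    rewrite <- (Nat.mod_unique _ _ _ _ (ltac:(lia) : (0 < k)%nat) E2). lia.
  - right. assert (E2 : (S N = k * q + S r)%nat) by lia.
    rewrite <- (Nat.div_unique _ _ _ _ (ltac:(lia) : (S r < k)%nat) E2).
    rewrite <- (Nat.mod_unique _ _ _ _ (ltac:(lia) : (S r < k)%nat) E2). lia.
Qed.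

Lemma sum_mult (k : nat) (f : nat -> R) : (k > 0)%nat ->
  (forall n, (n mod k <> 0)%nat -> f n = 0) ->
  forall N, sum_f_R0 f N = sum_f_R0 (fun m => f (k * m)%nat) (N / k).
Proof.
  intros Hk Hf N. induction N as [|N IH].
  - rewrite Nat.div_0_l by lia. simpl. rewrite Nat.mul_0_r. reflexivity.
  - simpl sum_f_R0 at 1. rewrite IH.
    destruct (succ_divmod N k Hk) as [[H1 [H2 H3]]|[H1 H2]].
    + rewrite H2. simpl sum_f_R0 at 2. rewrite <- H2, H3. reflexivity.
    + rewrite H2, (Hf _ H1). ring.
Qed.

Lemma Un_cv_div (u : nat -> R) l k : (k > 0)%nat -> Un_cv u l -> Un_cv (fun N => u (N / k)%nat) l.
Proof.
  intros Hk H eps He. destruct (H eps He) as [M HM]. exists (k * M)%nat.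
  intros n Hn. apply HM. apply Nat.div_le_lower_bound; lia.
Qed.

Lemma Un_cv_ext (u w : nat -> R) l : (forall n, u n = w n) -> Un_cv u l -> Un_cv w l.
Proof. intros E H eps He. destruct (H eps He) as [N HN]. exists N. intros n Hn. rewrite <- E. auto. Qed.

Definition vk (k n : nat) : R :=
  if Nat.eqb n 0 then - ln (INR k)
  else / INR n - (if Nat.eqb (n mod k) 0 then INR k / INR n else 0).

Lemma pow_abs_lt1 t k : Rabs t < 1 -> (k > 0)%nat -> Rabs (t ^ k) < 1.
Proof.
  intros Ht Hk. rewrite <- RPow_abs. destruct k as [|k]; [lia|].
  simpl. pose proof (Rabs_pos t).
  assert (Rabs t ^ k <= 1). { rewrite <- (pow1 k). apply pow_incr. lra. }
  assert (0 <= Rabs t ^ k) by (apply pow_le; lra). nra.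
Qed.


Fixpoint lsum (f : nat -> R) (N : nat) : R :=
  match N with O => 0 | S m => lsum f m + f m end.

Definition bnd (z : nat -> R) (e : R) : Prop :=
  forall N, sum_f_R0 (fun n => z n * z n) N <= e * e.

Lemma sum_nonneg (f : nat -> R) N : (forall n, 0 <= f n) -> 0 <= sum_f_R0 f N.
Proof. intros H. induction N; simpl; [apply H|]. pose proof (H (S N)); lra. Qed.

Lemma sum_le (f g : nat -> R) N : (forall n, f n <= g n) -> sum_f_R0 f N <= sum_f_R0 g N.
Proof. intros H. induction N; simpl; [apply H|]. pose proof (H (S N)); lra. Qed.

Lemma sum_lin (f g : nat -> R) a c N :
  sum_f_R0 (fun n => a * f n + c * g n) N = a * sum_f_R0 f N + c * sum_f_R0 g N.
Proof. induction N; simpl; [ring|]. rewrite IHN. ring. Qed.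

Lemma sum_scal_l (f : nat -> R) c N : sum_f_R0 (fun n => c * f n) N = c * sum_f_R0 f N.
Proof. induction N; simpl; [ring|]. rewrite IHN. ring. Qed.

Lemma bnd_tri (z w : nat -> R) e f : 0 < e -> 0 < f -> bnd z e -> bnd w f ->
  bnd (fun n => z n + w n) (e + f).
Proof.
  intros He Hf Hz Hw N.
  eapply Rle_trans.
  { apply (sum_le _ (fun n => (1 + f / e) * (z n * z n) + (1 + e / f) * (w n * w n))).
    intros n. pose proof (Rle_0_sqr (f * z n - e * w n)) as H. unfold Rsqr in H.
    assert (H2 : 2 * z n * w n <= f / e * (z n * z n) + e / f * (w n * w n)).
    { apply Rmult_le_reg_l with (e * f). nra.
      replace (e * f * (f / e * (z n * z n) + e / f * (w n * w n))) with
        (f * f * (z n * z n) + e * e * (w n * w n)) by (field; lra). nra. }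
    nra. }
  rewrite sum_lin.
  assert (0 <= 1 + f / e) by (unfold Rdiv; pose proof (Rinv_0_lt_compat e He); nra).
  assert (0 <= 1 + e / f) by (unfold Rdiv; pose proof (Rinv_0_lt_compat f Hf); nra).
  specialize (Hz N). specialize (Hw N).
  apply Rle_trans with ((1 + f / e) * (e * e) + (1 + e / f) * (f * f)).
  { apply Rplus_le_compat; apply Rmult_le_compat_l; auto. }
  right. field. lra.
Qed.

Lemma bnd_mono z e f : 0 <= e <= f -> bnd z e -> bnd z f.
Proof. intros H Hz N. specialize (Hz N). nra. Qed.

Lemma bnd_scal z e c : bnd z e -> bnd (fun n => c * z n) (Rabs c * e).
Proof.
  intros Hz N. replace (sum_f_R0 (fun n => c * z n * (c * z n)) N) with
    (c * c * sum_f_R0 (fun n => z n * z n) N).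
  - replace (Rabs c * e * (Rabs c * e)) with (Rabs c * Rabs c * (e * e)) by ring.
    rewrite <- Rabs_mult. rewrite Rabs_pos_eq by nra. apply Rmult_le_compat_l; [nra|]. apply Hz.
  - induction N; simpl; [ring|]. rewrite <- IHN. ring.
Qed.

Lemma bnd_ext z w e : (forall n, z n = w n) -> bnd z e -> bnd w e.
Proof. intros E H. replace w with z. exact H. apply functional_extensionality. exact E. Qed.

Lemma sum_zero N : sum_f_R0 (fun _ => 0) N = 0.
Proof. induction N; simpl; [reflexivity|]. rewrite IHN. ring. Qed.

Lemma bnd_zero e : bnd (fun _ => 0) e.
Proof. intros N. rewrite (sum_eq _ (fun _ => 0)) by (intros; ring). rewrite sum_zero. nra. Qed.

Lemma tail_sq (M : nat) : (1 <= M)%nat -> forall N,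
  sum_f_R0 (fun n => if Nat.leb n M then 0 else / (INR n * INR n)) N <= / INR M.
Proof.
  intros HM.
  assert (Hgen : forall N, (M <= N)%nat ->
     sum_f_R0 (fun n => if Nat.leb n M then 0 else / (INR n * INR n)) N <= / INR M - / INR N).
  { intros N HN. induction N as [|N IH].
    - lia.
    - destruct (Nat.eq_dec M (S N)) as [E|E].
      + subst M. assert (Hz : forall n, (n <= S N)%nat ->
           (fun n => if Nat.leb n (S N) then 0 else / (INR n * INR n)) n = 0).
        { intros n Hn. apply Nat.leb_le in Hn. simpl. rewrite Hn. reflexivity. }
        rewrite (sum_eq _ (fun _ => 0)) by (intros; apply Hz; lia).
        rewrite sum_zero.
        lra.
      + rewrite tech5. eapply Rle_trans. apply Rplus_le_compat_r. apply IH. lia.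
        assert (Hl : Nat.leb (S N) M = false) by (apply Nat.leb_gt; lia). cbv beta. rewrite Hl.
        assert (HN1 : 1 <= INR N) by (apply (le_INR 1); lia).
        rewrite S_INR.
        assert (H1 : / ((INR N + 1) * (INR N + 1)) <= / INR N - / (INR N + 1)).
        { replace (/ INR N - / (INR N + 1)) with (/ (INR N * (INR N + 1))) by (field; lra).
          apply Rinv_le_contravar; nra. }
        lra. }
  intros N. destruct (le_lt_dec M N) as [H|H].
  - eapply Rle_trans. apply Hgen, H. assert (0 < INR N) by (apply lt_0_INR; lia).
    pose proof (Rinv_0_lt_compat _ H0). lra.
  - rewrite (sum_eq _ (fun _ => 0)).
    + rewrite sum_zero.
      left. apply Rinv_0_lt_compat, lt_0_INR; lia.
    + intros n Hn. assert (Hl : Nat.leb n M = true) by (apply Nat.leb_le; lia). rewrite Hl. reflexivity.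
Qed.


Definition ek (k n : nat) : R := if Nat.eqb n k then 1 else 0.
Definition wk (k n : nat) : R :=
  if Nat.eqb n 0 then 0 else if Nat.eqb (n mod k) 0 then INR k / INR n else 0.

Lemma vk_decomp k n : (1 <= k)%nat -> vk k n = wk 1 n - ln (INR k) * ek 0 n - wk k n.
Proof.
  intros Hk. unfold vk, wk, ek. destruct (Nat.eqb n 0) eqn:E.
  - ring.
  - rewrite Nat.mod_1_r. simpl Nat.eqb. simpl INR. ring_simplify. unfold Rdiv. ring.
Qed.

Lemma sum_ek k N : sum_f_R0 (ek k) N = if Nat.leb k N then 1 else 0.
Proof.
  induction N as [|N IH].
  - simpl. unfold ek. destruct k; reflexivity.
  - rewrite tech5, IH. unfold ek. destruct (Nat.leb k N) eqn:E1.
    + apply Nat.leb_le in E1. assert (Nat.leb k (S N) = true) by (apply Nat.leb_le; lia).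
      assert (Nat.eqb (S N) k = false) by (apply Nat.eqb_neq; lia). rewrite H, H0. ring.
    + apply Nat.leb_gt in E1. destruct (Nat.eq_dec k (S N)) as [->|Hne].
      * rewrite Nat.eqb_refl, Nat.leb_refl. ring.
      * assert (Nat.leb k (S N) = false) by (apply Nat.leb_gt; lia).
        assert (Nat.eqb (S N) k = false) by (apply Nat.eqb_neq; lia). rewrite H, H0. ring.
Qed.

Lemma sum_ek_le k N : sum_f_R0 (ek k) N <= 1.
Proof. rewrite sum_ek. destruct (Nat.leb k N); lra. Qed.

Lemma ek_sq k n : ek k n * ek k n = ek k n.
Proof. unfold ek. destruct (Nat.eqb n k); ring. Qed.

Lemma bnd_ek k : bnd (ek k) 1.
Proof. intros N. rewrite (sum_eq _ (ek k)) by (intros; apply ek_sq). pose proof (sum_ek_le k N). lra. Qed.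

Lemma harm_sq J : sum_f_R0 (fun j => if Nat.eqb j 0 then 0 else / (INR j * INR j)) J <= 2.
Proof.
  apply Rle_trans with (sum_f_R0 (fun j => ek 1 j + (if Nat.leb j 1 then 0 else / (INR j * INR j))) J).
  - apply sum_le. intros j. unfold ek. destruct j as [|[|j]]; simpl Nat.eqb; simpl Nat.leb.
    + lra.
    + simpl. lra.
    + lra.
  - rewrite plus_sum. pose proof (sum_ek_le 1 J). pose proof (tail_sq 1 ltac:(lia) J).
    simpl INR in H0. rewrite Rinv_1 in H0. lra.
Qed.

Lemma bnd_wk m : (1 <= m)%nat -> bnd (wk m) 2.
Proof.
  intros Hm N. rewrite (sum_mult m (fun n => wk m n * wk m n) ltac:(lia)).
  2:{ intros n Hn. unfold wk; destruct (Nat.eqb n 0); [ring|]. apply Nat.eqb_neq in Hn; rewrite Hn; ring. }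
  eapply Rle_trans; [|apply Rle_trans with 2; [apply Rle_refl|lra]].
  eapply Rle_trans; [|apply (harm_sq (N / m))].
  right. apply sum_eq. intros j _. unfold wk.
  destruct j as [|j].
  - rewrite Nat.mul_0_r. simpl. ring.
  - assert (E1 : Nat.eqb (m * S j) 0 = false) by (apply Nat.eqb_neq; lia).
    assert (E2 : Nat.eqb ((m * S j) mod m) 0 = true).
    { apply Nat.eqb_eq. rewrite Nat.mul_comm. apply Nat.Div0.mod_mul. }
    rewrite E1, E2. simpl Nat.eqb. rewrite mult_INR. field.
    split; apply not_0_INR; lia.
Qed.

Inductive inW : (nat -> R) -> Prop :=
| inW0 : inW (fun _ => 0)
| inWv : forall k c, (2 <= k)%nat -> inW (fun n => c * vk k n)
| inWadd : forall x y, inW x -> inW y -> inW (fun n => x n + y n).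

Lemma inW_ext x y : inW x -> (forall n, x n = y n) -> inW y.
Proof. intros H E. replace y with x; auto. apply functional_extensionality; auto. Qed.

Lemma inW_scal x c : inW x -> inW (fun n => c * x n).
Proof.
  intros H. induction H.
  - apply inW_ext with (fun _ => 0). constructor. intros; ring.
  - apply inW_ext with (fun n => (c * c0) * vk k n). constructor; auto. intros; ring.
  - apply inW_ext with (fun n => c * x n + c * y n). constructor; auto. intros; ring.
Qed.

Definition A (x : nat -> R) : Prop :=
  forall eps, 0 < eps -> exists y, inW y /\ bnd (fun n => x n - y n) eps.

Lemma A_ext x y : A x -> (forall n, x n = y n) -> A y.
Proof. intros H E. replace y with x; auto. apply functional_extensionality; auto. Qed.

Lemma A_inW x : inW x -> A x.
Proof. intros H eps He. exists x. split; auto. apply bnd_ext with (fun _ => 0). intros; ring. apply bnd_zero. Qed.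

Lemma A_add x y : A x -> A y -> A (fun n => x n + y n).
Proof.
  intros Hx Hy eps He. destruct (Hx (eps/2) ltac:(lra)) as [x' [Hx1 Hx2]].
  destruct (Hy (eps/2) ltac:(lra)) as [y' [Hy1 Hy2]].
  exists (fun n => x' n + y' n). split. constructor; auto.
  replace eps with (eps/2 + eps/2) by field.
  eapply bnd_ext; [|apply (bnd_tri _ _ (eps/2) (eps/2) ltac:(lra) ltac:(lra) Hx2 Hy2)]. intros; simpl; ring.
Qed.

Lemma A_scal x c : A x -> A (fun n => c * x n).
Proof.
  intros Hx eps He. destruct (Hx (eps / (Rabs c + 1))) as [y [Hy1 Hy2]].
  { apply Rdiv_lt_0_compat; auto. pose proof (Rabs_pos c); lra. }
  exists (fun n => c * y n). split. apply inW_scal; auto.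
  apply bnd_mono with (Rabs c * (eps / (Rabs c + 1))).
  - pose proof (Rabs_pos c). split. apply Rmult_le_pos; auto. left; apply Rdiv_lt_0_compat; lra.
    replace (Rabs c * (eps / (Rabs c + 1))) with (eps * (Rabs c / (Rabs c + 1))) by (field; lra).
    rewrite <- (Rmult_1_r eps) at 2. apply Rmult_le_compat_l; [lra|].
    apply Rmult_le_reg_r with (Rabs c + 1); [lra|]. unfold Rdiv. rewrite Rmult_assoc, Rinv_l by lra. lra.
  - eapply bnd_ext; [|apply (bnd_scal _ _ c Hy2)]. intros; simpl; ring.
Qed.

Lemma A_sub x y : A x -> A y -> A (fun n => x n - y n).
Proof.
  intros Hx Hy. apply A_ext with (fun n => x n + (-1) * y n). apply A_add; auto. apply A_scal; auto.
  intros; ring.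
Qed.

Lemma A_closed y : (forall eps, 0 < eps -> exists x, A x /\ bnd (fun n => y n - x n) eps) -> A y.
Proof.
  intros H eps He. destruct (H (eps/2) ltac:(lra)) as [x [Hx1 Hx2]].
  destruct (Hx1 (eps/2) ltac:(lra)) as [z [Hz1 Hz2]].
  exists z. split; auto. replace eps with (eps/2 + eps/2) by field.
  eapply bnd_ext; [|apply (bnd_tri _ _ (eps/2) (eps/2) ltac:(lra) ltac:(lra) Hx2 Hz2)]. intros; simpl; ring.
Qed.

Lemma bnd_sub z w e f : 0 < e -> 0 < f -> bnd z e -> bnd w f -> bnd (fun n => z n - w n) (e + f).
Proof.
  intros He Hf Hz Hw. eapply bnd_ext; [|apply (bnd_tri z (fun n => -1 * w n) e f He Hf Hz)].
  intros; simpl; ring. replace f with (Rabs (-1) * f). apply bnd_scal; auto.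
  rewrite Rabs_left by lra. ring.
Qed.

Lemma A_e0 : A (ek 0).
Proof.
  apply A_closed. intros eps He.
  destruct (INR_unbounded (exp (4 / eps))) as [K HK].
  assert (HK1 : (1 <= K)%nat).
  { destruct K; [|lia]. simpl in HK. pose proof (exp_pos (4/eps)); lra. }
  assert (HlnK : 4 / eps < ln (INR K)).
  { rewrite <- (ln_exp (4/eps)). apply ln_increasing; auto. apply exp_pos. }
  assert (Hpos : 0 < ln (INR K)).
  { eapply Rlt_trans; [|exact HlnK]. apply Rdiv_lt_0_compat; lra. }
  exists (fun n => / ln (INR K) * (vk 2 n - vk (2 * K) n)). split.
  - apply A_inW. apply inW_ext with (fun n => (/ ln (INR K) * 1) * vk 2 n + (/ ln (INR K) * -1) * vk (2*K) n).
    constructor; constructor; lia. intros; ring.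
  - apply bnd_mono with (Rabs (/ ln (INR K)) * (2 + 2)).
    { rewrite Rabs_pos_eq by (left; apply Rinv_0_lt_compat; auto). split.
      apply Rmult_le_pos; [left; apply Rinv_0_lt_compat; auto|lra].
      apply Rmult_le_reg_l with (ln (INR K)); auto.
      rewrite <- Rmult_assoc, Rinv_r by lra.
      assert (H4 : 4 < ln (INR K) * eps).
      { apply (Rmult_lt_compat_r eps) in HlnK; [|lra]. unfold Rdiv in HlnK.
        rewrite Rmult_assoc, Rinv_l in HlnK by lra. lra. }
      lra. }
    eapply bnd_ext; [|apply (bnd_scal _ _ (/ ln (INR K)) (bnd_sub (wk 2) (wk (2 * K)) 2 2 ltac:(lra) ltac:(lra) (bnd_wk 2 ltac:(lia)) (bnd_wk (2*K) ltac:(lia))))].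
    intros n. cbv beta. rewrite !vk_decomp by lia. rewrite mult_INR, ln_mult.
    2:{ simpl; lra. } 2:{ apply lt_0_INR; lia. }
    unfold ek. destruct (Nat.eqb n 0); field; lra.
Qed.


Definition Dop (d : nat) (x : nat -> R) (n : nat) : R :=
  if Nat.eqb (n mod d) 0 then x (n / d)%nat else 0.

Lemma mod0_iff a b : b <> 0%nat -> (Nat.eqb (a mod b) 0 = true <-> Nat.divide b a).
Proof. intros Hb. rewrite Nat.eqb_eq. apply Nat.mod_divide; auto. Qed.

Lemma mod0_false a b : b <> 0%nat -> (Nat.eqb (a mod b) 0 = false <-> ~ Nat.divide b a).
Proof. intros Hb. rewrite <- (mod0_iff a b Hb). destruct (Nat.eqb (a mod b) 0); split; congruence. Qed.

Lemma D_vk d k n : (1 <= d)%nat -> (1 <= k)%nat -> Dop d (vk k) n = vk (k * d) n - vk d n.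
Proof.
  intros Hd Hk. unfold Dop.
  destruct (Nat.eqb (n mod d) 0) eqn:E.
  - apply (mod0_iff n d ltac:(lia)) in E. destruct E as [m Hm]. subst n.
    rewrite Nat.div_mul by lia.
    unfold vk. destruct (Nat.eqb m 0) eqn:Em.
    + apply Nat.eqb_eq in Em. subst m. simpl Nat.eqb.
      rewrite mult_INR, ln_mult by (apply lt_0_INR; lia). ring.
    + apply Nat.eqb_neq in Em.
      assert (E1 : Nat.eqb (m * d) 0 = false) by (apply Nat.eqb_neq; lia). rewrite E1.
      assert (E2 : Nat.eqb ((m * d) mod d) 0 = true) by (apply mod0_iff; [lia| exists m; lia]).
      rewrite E2.
      assert (E3 : Nat.eqb ((m * d) mod (k * d)) 0 = Nat.eqb (m mod k) 0).
      { destruct (Nat.eqb (m mod k) 0) eqn:E4.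
        - apply mod0_iff in E4; [|lia]. apply mod0_iff; [lia|]. destruct E4 as [q Hq]. exists q. subst m. lia.
        - apply mod0_false in E4; [|lia]. apply mod0_false; [lia|]. intros [q Hq]. apply E4.
          exists q. apply (Nat.mul_cancel_r _ _ d); lia. }
      rewrite E3. rewrite !mult_INR.
      assert (INR m <> 0) by (apply not_0_INR; lia). assert (INR d <> 0) by (apply not_0_INR; lia).
      destruct (Nat.eqb (m mod k) 0); field; auto.
  - apply (mod0_false n d ltac:(lia)) in E.
    unfold vk. destruct (Nat.eqb n 0) eqn:En.
    + apply Nat.eqb_eq in En. subst n. exfalso. apply E. exists 0%nat. lia.
    + assert (E1 : Nat.eqb (n mod (k * d)) 0 = false).
      { apply mod0_false; [lia|]. intros [q Hq]. apply E. exists (q * k)%nat. lia. }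
      assert (E2 : Nat.eqb (n mod d) 0 = false) by (apply mod0_false; auto; lia).
      rewrite E1, E2. ring.
Qed.

Lemma D_lin d x y a c : (forall n, Dop d (fun m => a * x m + c * y m) n = a * Dop d x n + c * Dop d y n).
Proof. intros n. unfold Dop. destruct (Nat.eqb (n mod d) 0); ring. Qed.

Lemma inW_D d x : (2 <= d)%nat -> inW x -> inW (Dop d x).
Proof.
  intros Hd H. induction H.
  - apply inW_ext with (fun _ => 0). constructor. intros n. unfold Dop. destruct (Nat.eqb (n mod d) 0); ring.
  - apply inW_ext with (fun n => c * vk (k * d) n + (-c) * vk d n).
    constructor; constructor; nia.
    intros n. replace (Dop d (fun n => c * vk k n) n) with (c * Dop d (vk k) n)
      by (unfold Dop; destruct (Nat.eqb (n mod d) 0); ring).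
    rewrite D_vk by lia. ring.
  - apply inW_ext with (fun n => Dop d x n + Dop d y n).
    constructor; auto.
    intros n. unfold Dop. destruct (Nat.eqb (n mod d) 0); ring.
Qed.

Definition isP (q : nat) : Prop := (2 <= q)%nat /\ forall d, (2 <= d < q)%nat -> ~ Nat.divide d q.

Fixpoint T (Q : nat) (x : nat -> R) : nat -> R :=
  match Q with
  | O => x
  | S Q' => if excluded_middle_informative (isP (S Q'))
            then (fun n => T Q' x n - / INR (S Q') * Dop (S Q') (T Q' x) n)
            else T Q' x
  end.

Lemma T_inW Q x : inW x -> inW (T Q x).
Proof.
  intros H. induction Q as [|Q IH]; cbn [T]. exact H.
  destruct (excluded_middle_informative (isP (S Q))) as [HP|HP]; auto.
  apply inW_ext with (fun n => T Q x n + (- / INR (S Q)) * Dop (S Q) (T Q x) n).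
  constructor; auto. apply inW_scal. apply inW_D; auto. apply HP.
  intros; ring.
Qed.

Lemma T_lin Q x y a c n : T Q (fun m => a * x m + c * y m) n = a * T Q x n + c * T Q y n.
Proof.
  revert n. induction Q as [|Q IH]; intros n; cbn [T]. reflexivity.
  destruct (excluded_middle_informative (isP (S Q))) as [HP|HP]; auto.
  rewrite IH. unfold Dop. destruct (Nat.eqb (n mod S Q) 0); rewrite ?IH; ring.
Qed.

Lemma D_e0 d n : (1 <= d)%nat -> Dop d (ek 0) n = ek 0 n.
Proof.
  intros Hd. unfold Dop, ek. destruct (Nat.eqb (n mod d) 0) eqn:E.
  - apply (mod0_iff n d ltac:(lia)) in E. destruct E as [m Hm]. subst n.
    rewrite Nat.div_mul by lia. destruct m; simpl; [reflexivity|].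
    assert (Nat.eqb (d + m * d) 0 = false) by (apply Nat.eqb_neq; lia). rewrite H. reflexivity.
  - destruct (Nat.eqb n 0) eqn:E2; auto. apply Nat.eqb_eq in E2. subst n.
    apply (mod0_false 0 d ltac:(lia)) in E. exfalso. apply E. exists 0%nat. lia.
Qed.

Lemma T_e0 Q : exists c, forall n, T Q (ek 0) n = c * ek 0 n.
Proof.
  induction Q as [|Q [c IH]]; cbn [T]. exists 1. intros; ring.
  destruct (excluded_middle_informative (isP (S Q))) as [HP|HP].
  - exists (c - / INR (S Q) * c). intros n. rewrite IH.
    replace (Dop (S Q) (T Q (ek 0)) n) with (c * Dop (S Q) (ek 0) n).
    rewrite D_e0 by lia. ring.
    unfold Dop. destruct (Nat.eqb (n mod S Q) 0); rewrite ?IH; ring.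
  - exists c. exact IH.
Qed.

Definition NoDiv (Q m : nat) : Prop := forall d, (2 <= d <= Q)%nat -> ~ Nat.divide d m.
Definition PQ (Q k n : nat) : Prop := n <> 0%nat /\ Nat.divide k n /\ NoDiv Q (n / k).

Lemma nodiv_nonprime Q m : ~ isP (S Q) -> NoDiv Q m -> NoDiv (S Q) m.
Proof.
  intros HP H d Hd Hdm. destruct (Nat.eq_dec d (S Q)) as [->|Hne].
  - apply HP. split; [lia|]. intros d' Hd' Hdq. apply (H d'); [lia|].
    eapply Nat.divide_trans; eauto.
  - apply (H d); [lia|auto].
Qed.

Lemma gcd_prime d q : isP q -> (2 <= d < q)%nat -> Nat.gcd d q = 1%nat.
Proof.
  intros [Hq HP] Hd. set (g := Nat.gcd d q).
  assert (Hg1 : Nat.divide g d) by apply Nat.gcd_divide_l.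
  assert (Hg2 : Nat.divide g q) by apply Nat.gcd_divide_r.
  assert (Hg0 : g <> 0%nat) by (unfold g; intros E; apply Nat.gcd_eq_0 in E; lia).
  assert (Hgd : (g <= d)%nat) by (apply Nat.divide_pos_le; auto; lia).
  destruct (Nat.eq_dec g 1) as [E|E]; auto. exfalso. apply (HP g); auto. lia.
Qed.

Lemma nodiv_mul_prime Q j : isP (S Q) -> NoDiv Q j -> NoDiv Q (j * S Q).
Proof.
  intros HP H d Hd Hdv. apply (H d Hd).
  apply (Nat.gauss d (S Q) j). rewrite Nat.mul_comm; auto. apply gcd_prime; auto. lia.
Qed.

Lemma nodiv_div Q j q : NoDiv Q (j * q) -> NoDiv Q j.
Proof. intros H d Hd Hdv. apply (H d Hd). apply Nat.divide_mul_l; auto. Qed.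

Lemma T_wk k Q n : (1 <= k)%nat ->
  T Q (wk k) n = if excluded_middle_informative (PQ Q k n) then INR k / INR n else 0.
Proof.
  intros Hk. revert n. induction Q as [|Q IH]; intros n; cbn [T].
  - unfold wk. destruct (excluded_middle_informative (PQ 0 k n)) as [[H1 [H2 H3]]|H].
    + assert (E1 : Nat.eqb n 0 = false) by (apply Nat.eqb_neq; auto).
      assert (E2 : Nat.eqb (n mod k) 0 = true) by (apply mod0_iff; auto; lia). rewrite E1, E2. reflexivity.
    + destruct (Nat.eqb n 0) eqn:E1; auto. destruct (Nat.eqb (n mod k) 0) eqn:E2; auto.
      exfalso. apply H. split; [apply Nat.eqb_neq; auto|]. split.
      apply (mod0_iff n k ltac:(lia)); auto. intros d Hd. lia.
  - destruct (excluded_middle_informative (isP (S Q))) as [HP|HP].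
    2:{ rewrite IH. destruct (excluded_middle_informative (PQ Q k n)) as [H1|H1];
        destruct (excluded_middle_informative (PQ (S Q) k n)) as [H2|H2]; auto; exfalso.
        - apply H2. destruct H1 as [? [? ?]]. split; auto. split; auto. apply nodiv_nonprime; auto.
        - apply H1. destruct H2 as [? [? H3]]. split; auto. split; auto. intros d Hd. apply H3. lia. }
    assert (HQ : INR (S Q) <> 0) by (apply not_0_INR; lia).
    unfold Dop. destruct (Nat.eqb (n mod S Q) 0) eqn:Emod.
    + apply (mod0_iff n (S Q) ltac:(lia)) in Emod. destruct Emod as [n' Hn']. subst n.
      rewrite Nat.div_mul by lia. rewrite IH, IH.
      destruct (excluded_middle_informative (PQ Q k n')) as [H1|H1].
      * destruct H1 as [Hn0 [[j Hj] Hnd]]. subst n'. rewrite Nat.div_mul in Hnd by lia.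
        assert (H2 : PQ Q k (j * k * S Q)).
        { split; [nia|]. split. exists (j * S Q)%nat; lia.
          replace (j * k * S Q)%nat with (j * S Q * k)%nat by lia. rewrite Nat.div_mul by lia.
          apply nodiv_mul_prime; auto. }
        destruct (excluded_middle_informative (PQ Q k (j * k * S Q))) as [_|C]; [|contradiction].
        destruct (excluded_middle_informative (PQ (S Q) k (j * k * S Q))) as [H3|_].
        { exfalso. destruct H3 as [_ [_ H3]].
          replace (j * k * S Q)%nat with (j * S Q * k)%nat in H3 by lia. rewrite Nat.div_mul in H3 by lia.
          apply (H3 (S Q)). split; [destruct HP; lia|lia]. exists j. lia. }
        destruct (excluded_middle_informative (PQ Q k (j * k))) as [_|C]; [|exfalso; apply C; split; [nia|]; split; [exists j; lia|]; rewrite Nat.div_mul by lia; auto].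
        rewrite !mult_INR. assert (INR j <> 0) by (apply not_0_INR; nia).
        assert (INR k <> 0) by (apply not_0_INR; lia). field. auto.
      * destruct (excluded_middle_informative (PQ Q k (n' * S Q))) as [H2|H2];
        destruct (excluded_middle_informative (PQ (S Q) k (n' * S Q))) as [H3|H3]; try ring.
        -- exfalso. apply H3. destruct H2 as [Hn0 [[i Hi] Hnd]]. split; auto. split; [exists i; auto|].
           intros d Hd Hdv. destruct (Nat.eq_dec d (S Q)) as [->|Hne].
           ++ rewrite Hi in Hdv. rewrite Nat.div_mul in Hdv by lia. destruct Hdv as [t Ht]. subst i.
              apply H1. assert (n' = t * k)%nat by nia. subst n'.
              split; [nia|]. split; [exists t; lia|]. rewrite Nat.div_mul by lia.
              rewrite Hi in Hnd. rewrite Nat.div_mul in Hnd by lia. apply (nodiv_div _ _ (S Q)). auto.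
           ++ apply (Hnd d); auto. lia.
        -- exfalso. apply H2. destruct H3 as [? [? H3]]. split; auto. split; auto. intros d Hd. apply H3. lia.
    + rewrite IH. destruct (excluded_middle_informative (PQ Q k n)) as [H1|H1];
        destruct (excluded_middle_informative (PQ (S Q) k n)) as [H2|H2]; try ring; exfalso.
      * apply H2. destruct H1 as [Hn0 [[i Hi] Hnd]]. split; auto. split; [exists i; auto|].
        intros d Hd Hdv. destruct (Nat.eq_dec d (S Q)) as [->|Hne].
        -- apply (mod0_false n (S Q) ltac:(lia)) in Emod. apply Emod. rewrite Hi.
           rewrite Hi, Nat.div_mul in Hdv by lia. apply Nat.divide_mul_l; auto.
        -- apply (Hnd d); auto. lia.
      * apply H1. destruct H2 as [? [? H3]]. split; auto. split; auto. intros d Hd. apply H3. lia.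
Qed.

Lemma T_wk_pt k Q n : (1 <= k)%nat ->
  (T Q (wk k) n - ek k n) * (T Q (wk k) n - ek k n) <=
  INR k * INR k * (if Nat.leb n (k * Q) then 0 else / (INR n * INR n)).
Proof.
  intros Hk. assert (Hnn : 0 <= (if Nat.leb n (k * Q) then 0 else / (INR n * INR n))).
  { destruct (Nat.leb n (k * Q)) eqn:E. lra. left. apply Rinv_0_lt_compat.
    apply Nat.leb_gt in E. assert (0 < INR n) by (apply lt_0_INR; lia). nra. }
  assert (Hk2 : 0 <= INR k * INR k) by nra.
  rewrite T_wk by auto. unfold ek.
  destruct (excluded_middle_informative (PQ Q k n)) as [[Hn0 [[j Hj] Hnd]]|H].
  - subst n. rewrite Nat.div_mul in Hnd by lia.
    destruct (Nat.eq_dec j 1) as [->|Hj1].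
    + rewrite Nat.mul_1_l in *. rewrite Nat.eqb_refl. replace (INR k / INR k - 1) with 0 by (field; apply not_0_INR; lia).
      nra.
    + assert (HjQ : (Q < j)%nat).
      { destruct (le_lt_dec j Q) as [H|H]; auto. exfalso. apply (Hnd j). lia. apply Nat.divide_refl. }
      assert (E1 : Nat.eqb (j * k) k = false) by (apply Nat.eqb_neq; nia).
      assert (E2 : Nat.leb (j * k) (k * Q) = false) by (apply Nat.leb_gt; nia).
      rewrite E1, E2. right. rewrite mult_INR. field. split; apply not_0_INR; lia.
  - destruct (Nat.eqb n k) eqn:E.
    + exfalso. apply Nat.eqb_eq in E. subst n. apply H. split; [lia|]. split; [apply Nat.divide_refl|].
      rewrite Nat.div_same by lia. intros d Hd Hdv. apply Nat.divide_pos_le in Hdv; lia.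
    + nra.
Qed.

Lemma T_wk_err k Q N : (1 <= k)%nat -> (1 <= Q)%nat ->
  sum_f_R0 (fun n => (T Q (wk k) n - ek k n) * (T Q (wk k) n - ek k n)) N <= INR k / INR Q.
Proof.
  intros Hk HQ. eapply Rle_trans. apply sum_le. intros n. apply (T_wk_pt k Q n Hk).
  replace (sum_f_R0 (fun n => INR k * INR k * (if Nat.leb n (k * Q) then 0 else / (INR n * INR n))) N)
    with (INR k * INR k * sum_f_R0 (fun n => if Nat.leb n (k * Q) then 0 else / (INR n * INR n)) N).
  2:{ rewrite scal_sum. apply sum_eq. intros; ring. }
  eapply Rle_trans. apply Rmult_le_compat_l. assert (0 <= INR k) by apply pos_INR. nra.
  apply tail_sq. nia. right. rewrite mult_INR. field. split; apply not_0_INR; lia.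
Qed.

Lemma bnd_T_wk k Q eps : (1 <= k <= 2 * k)%nat -> 0 < eps -> INR Q > 4 * INR k / (eps * eps) ->
  bnd (fun n => T Q (wk k) n - ek k n) (eps / 2).
Proof.
  intros Hk He HQ N.
  assert (Hkp : 0 < INR k) by (apply lt_0_INR; lia).
  assert (HQp : 0 < INR Q).
  { eapply Rlt_trans; [|exact HQ]. apply Rdiv_lt_0_compat; nra. }
  assert (HQ1 : (1 <= Q)%nat) by (destruct Q; [simpl in HQp; lra|lia]).
  eapply Rle_trans. apply T_wk_err; lia.
  apply Rmult_le_reg_r with (INR Q); auto. unfold Rdiv at 1. rewrite Rmult_assoc, Rinv_l by lra.
  apply Rmult_lt_compat_r with (r := eps * eps) in HQ; [|nra].
  unfold Rdiv in HQ. rewrite Rmult_assoc, Rinv_l in HQ by nra. nra.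
Qed.

Lemma inW_vk k : (2 <= k)%nat -> inW (vk k).
Proof. intros Hk. apply inW_ext with (fun n => 1 * vk k n). constructor; auto. intros; ring. Qed.

Lemma A_e1k k : (2 <= k)%nat -> A (fun n => ek 1 n - ek k n).
Proof.
  intros Hk. apply A_closed. intros eps He.
  destruct (INR_unbounded (4 * INR k / (eps * eps))) as [Q HQ].
  destruct (T_e0 Q) as [cQ HcQ].
  exists (fun n => T Q (vk k) n + (ln (INR k) * cQ) * ek 0 n). split.
  - apply A_add. apply A_inW, T_inW, inW_vk; auto. apply A_scal, A_e0.
  - assert (Hdec : vk k = fun m => 1 * (fun m => 1 * wk 1 m + (- ln (INR k)) * ek 0 m) m + (-1) * wk k m).
    { apply functional_extensionality. intros m. rewrite vk_decomp by lia. ring. }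
    replace eps with (eps / 2 + eps / 2) by field.
    eapply bnd_ext; [|apply (bnd_sub _ _ (eps/2) (eps/2) ltac:(lra) ltac:(lra)
        (bnd_T_wk k Q eps ltac:(lia) He HQ) (bnd_T_wk 1 Q eps ltac:(lia) He ltac:(
          eapply Rle_lt_trans; [|exact HQ]; unfold Rdiv;
          apply Rmult_le_compat_r; [left; apply Rinv_0_lt_compat; nra|];
          apply Rmult_le_compat_l; [lra|]; apply (le_INR 1); lia)))].
    intros n. cbv beta. rewrite Hdec. rewrite !T_lin. rewrite HcQ. ring.
Qed.

Lemma A_lsum (f : nat -> nat -> R) M : (forall j, A (f j)) -> A (fun n => lsum (fun j => f j n) M).
Proof.
  intros H. induction M as [|M IH]; simpl.
  - apply A_inW, inW0.
  - apply A_add; auto.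
Qed.

Lemma sum_lsum (f : nat -> nat -> R) M N :
  sum_f_R0 (fun n => lsum (fun j => f j n) M) N = lsum (fun j => sum_f_R0 (f j) N) M.
Proof.
  induction M as [|M IH]; simpl. apply sum_zero. rewrite plus_sum, IH. reflexivity.
Qed.

Lemma gM_closed M n : lsum (fun j => ek (j + 2) n) M = if andb (Nat.leb 2 n) (Nat.ltb n (M + 2)) then 1 else 0.
Proof.
  induction M as [|M IH]; simpl lsum.
  - replace (0 + 2)%nat with 2%nat by lia.
    destruct (Nat.leb 2 n) eqn:E1; destruct (Nat.ltb n 2) eqn:E2; simpl andb; try reflexivity.
    apply Nat.leb_le in E1; apply Nat.ltb_lt in E2; lia.
  - rewrite IH. unfold ek. replace (S (M + 2))%nat with (S (M + 2)) by lia.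
    destruct (Nat.leb 2 n) eqn:E1; simpl andb.
    + apply Nat.leb_le in E1. destruct (Nat.eqb n (M + 2)) eqn:E3.
      * apply Nat.eqb_eq in E3. subst n.
        assert (Nat.ltb (M + 2) (M + 2) = false) by (apply Nat.ltb_ge; lia).
        assert (Nat.ltb (M + 2) (S (M + 2)) = true) by (apply Nat.ltb_lt; lia). rewrite H, H0. ring.
      * apply Nat.eqb_neq in E3. destruct (Nat.ltb n (M + 2)) eqn:E4.
        -- apply Nat.ltb_lt in E4. assert (Nat.ltb n (S (M + 2)) = true) by (apply Nat.ltb_lt; lia). rewrite H. ring.
        -- apply Nat.ltb_ge in E4. assert (Nat.ltb n (S (M + 2)) = false) by (apply Nat.ltb_ge; lia). rewrite H. ring.
    + apply Nat.leb_gt in E1. assert (Nat.eqb n (M + 2) = false) by (apply Nat.eqb_neq; lia). rewrite H. ring.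
Qed.

Lemma A_e1 : A (ek 1).
Proof.
  apply A_closed. intros eps He.
  destruct (INR_unbounded (/ (eps * eps))) as [M HM].
  assert (HMp : 0 < INR M) by (eapply Rlt_trans; [|exact HM]; apply Rinv_0_lt_compat; nra).
  assert (HM1 : (1 <= M)%nat) by (destruct M; [simpl in HMp; lra|lia]).
  exists (fun n => lsum (fun j => / INR M * (ek 1 n - ek (j + 2) n)) M). split.
  - apply A_lsum. intros j. apply A_scal. apply A_e1k. lia.
  - intros N.
    assert (E : forall n, ek 1 n - lsum (fun j => / INR M * (ek 1 n - ek (j + 2) n)) M =
                          / INR M * lsum (fun j => ek (j + 2) n) M).
    { intros n. assert (G : forall M', lsum (fun j => / INR M * (ek 1 n - ek (j + 2) n)) M' =
         / INR M * INR M' * ek 1 n - / INR M * lsum (fun j => ek (j + 2) n) M').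
      { induction M' as [|M' IH]; simpl lsum. simpl. ring. rewrite IH, S_INR. ring. }
      rewrite G. field. lra. }
    rewrite (sum_eq _ (fun n => / INR M * / INR M * lsum (fun j => ek (j + 2) n) M)).
    2:{ intros n _. rewrite E. rewrite gM_closed.
        destruct (andb (Nat.leb 2 n) (Nat.ltb n (M + 2))); ring. }
    rewrite sum_scal_l. rewrite sum_lsum.
    assert (Hb : lsum (fun j => sum_f_R0 (ek (j + 2)) N) M <= INR M).
    { clear. induction M as [|M IH]; simpl lsum. simpl; lra. rewrite S_INR.
      pose proof (sum_ek_le (M + 2) N). lra. }
    apply Rle_trans with (/ INR M * / INR M * INR M).
    { rewrite (Rmult_comm _ (lsum _ _)). rewrite (Rmult_comm _ (INR M)).
      apply Rmult_le_compat_r; auto. left. apply Rmult_lt_0_compat; apply Rinv_0_lt_compat; auto. }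
    replace (/ INR M * / INR M * INR M) with (/ INR M) by (field; lra).
    left. apply Rmult_lt_reg_l with (INR M); auto. rewrite Rinv_r by lra.
    apply Rmult_lt_compat_r with (r := eps * eps) in HM; [|nra]. rewrite Rinv_l in HM by nra. nra.
Qed.

Lemma A_ek k : A (ek k).
Proof.
  destruct k as [|[|k]]. apply A_e0. apply A_e1.
  apply A_ext with (fun n => ek 1 n - (ek 1 n - ek (S (S k)) n)).
  apply A_sub. apply A_e1. apply A_e1k. lia. intros; ring.
Qed.

Lemma lsum_ek (a : nat -> R) M n : lsum (fun j => a j * ek j n) M = if Nat.ltb n M then a n else 0.
Proof.
  induction M as [|M IH]; simpl lsum.
  - destruct (Nat.ltb n 0) eqn:E; [apply Nat.ltb_lt in E; lia|reflexivity].
  - rewrite IH. unfold ek. destruct (Nat.eqb n M) eqn:E1.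
    + apply Nat.eqb_eq in E1. subst. assert (Nat.ltb M M = false) by (apply Nat.ltb_ge; lia).
      assert (Nat.ltb M (S M) = true) by (apply Nat.ltb_lt; lia). rewrite H, H0. ring.
    + apply Nat.eqb_neq in E1. destruct (Nat.ltb n M) eqn:E2.
      * apply Nat.ltb_lt in E2. assert (Nat.ltb n (S M) = true) by (apply Nat.ltb_lt; lia). rewrite H. ring.
      * apply Nat.ltb_ge in E2. assert (Nat.ltb n (S M) = false) by (apply Nat.ltb_ge; lia). rewrite H. ring.
Qed.

Lemma A_trunc (a : nat -> R) M : A (fun n => if Nat.ltb n M then a n else 0).
Proof.
  apply A_ext with (fun n => lsum (fun j => a j * ek j n) M).
  apply A_lsum. intros j. apply A_scal, A_ek. intros n. apply lsum_ek.
Qed.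

Lemma tail_eq (a : nat -> R) N0 N : (N0 <= N)%nat ->
  sum_f_R0 (fun n => (a n - (if Nat.ltb n (S N0) then a n else 0)) * (a n - (if Nat.ltb n (S N0) then a n else 0))) N =
  sum_f_R0 (fun n => a n * a n) N - sum_f_R0 (fun n => a n * a n) N0.
Proof.
  intros H. induction N as [|N IH].
  - assert (N0 = 0%nat) by lia. subst. simpl. ring.
  - destruct (Nat.eq_dec N0 (S N)) as [E|E].
    + subst N0. rewrite (sum_eq _ (fun _ => 0)).
      * rewrite sum_zero. ring.
      * intros i Hi. assert (Nat.ltb i (S (S N)) = true) by (apply Nat.ltb_lt; lia). rewrite H0. ring.
    + rewrite tech5, tech5, IH by lia.
      assert (Nat.ltb (S N) (S N0) = false) by (apply Nat.ltb_ge; lia). rewrite H0. ring.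
Qed.

Lemma dense_real (a g : nat -> R) L : (forall n, a n * a n <= g n) -> infinite_sum g L -> A a.
Proof.
  intros Hg HL. apply A_closed. intros eps He.
  destruct (HL (eps * eps / 2)) as [N0 HN0]. { apply Rlt_gt. apply Rdiv_lt_0_compat; nra. }
  exists (fun n => if Nat.ltb n (S N0) then a n else 0). split. apply A_trunc.
  intros N. destruct (le_lt_dec N0 N) as [HN|HN].
  - rewrite tail_eq by auto.
    assert (Hmono : forall M, (N0 <= M)%nat -> sum_f_R0 (fun n => a n * a n) M - sum_f_R0 (fun n => a n * a n) N0
                                    <= sum_f_R0 g M - sum_f_R0 g N0).
    { intros M HM. induction M as [|M IH]. assert (N0 = 0%nat) by lia. subst. lra.
      destruct (Nat.eq_dec N0 (S M)) as [->|Hne]. lra.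
      rewrite !tech5. pose proof (IH ltac:(lia)). pose proof (Hg (S M)). lra. }
    eapply Rle_trans. apply Hmono; auto.
    pose proof (HN0 N HN) as H1. pose proof (HN0 N0 (Nat.le_refl _)) as H2.
    unfold Rdist in H1, H2. apply Rabs_def2 in H1. apply Rabs_def2 in H2. lra.
  - rewrite (sum_eq _ (fun _ => 0)). rewrite sum_zero. nra.
    intros i Hi. assert (Nat.ltb i (S N0) = true) by (apply Nat.ltb_lt; lia). rewrite H. ring.
Qed.

Lemma lsum_ext (f g : nat -> R) M : (forall j, (j < M)%nat -> f j = g j) -> lsum f M = lsum g M.
Proof. intros H. induction M; simpl; [reflexivity|]. rewrite IHM; [rewrite H by lia; reflexivity|intros; apply H; lia]. Qed.

Lemma lsum_plus (f g : nat -> R) M : lsum (fun j => f j + g j) M = lsum f M + lsum g M.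
Proof. induction M; simpl; [ring|]. rewrite IHM. ring. Qed.

Lemma lsum_zero M : lsum (fun _ => 0) M = 0.
Proof. induction M; simpl; [reflexivity|]. rewrite IHM. ring. Qed.

Lemma lsum_pad (f : nat -> R) N M : (N <= M)%nat -> lsum (fun j => if Nat.ltb j N then f j else 0) M = lsum f N.
Proof.
  intros H. induction M as [|M IH].
  - assert (N = 0%nat) by lia. subst. reflexivity.
  - destruct (Nat.eq_dec N (S M)) as [->|Hne].
    + apply lsum_ext. intros j Hj. apply Nat.ltb_lt in Hj. rewrite Hj. reflexivity.
    + simpl. rewrite IH by lia. assert (Nat.ltb M N = false) by (apply Nat.ltb_ge; lia). rewrite H0. ring.
Qed.

Lemma lsum_single x m M : lsum (fun j => if Nat.eqb j m then x else 0) M = if Nat.ltb m M then x else 0.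
Proof.
  induction M as [|M IH]; simpl lsum.
  - destruct (Nat.ltb m 0) eqn:E; [apply Nat.ltb_lt in E; lia|reflexivity].
  - rewrite IH. destruct (Nat.eqb M m) eqn:E1.
    + apply Nat.eqb_eq in E1. subst m. assert (Nat.ltb M M = false) by (apply Nat.ltb_ge; lia).
      assert (Nat.ltb M (S M) = true) by (apply Nat.ltb_lt; lia). rewrite H, H0. ring.
    + apply Nat.eqb_neq in E1. destruct (Nat.ltb m M) eqn:E2.
      * apply Nat.ltb_lt in E2. assert (Nat.ltb m (S M) = true) by (apply Nat.ltb_lt; lia). rewrite H. ring.
      * apply Nat.ltb_ge in E2. assert (Nat.ltb m (S M) = false) by (apply Nat.ltb_ge; lia). rewrite H. ring.
Qed.

Definition repr (y : nat -> R) (N : nat) (c : nat -> R) : Prop :=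
  forall n, y n = lsum (fun j => c j * vk (j + 2) n) N.

Lemma repr_pad y N c M : (N <= M)%nat -> repr y N c -> repr y M (fun j => if Nat.ltb j N then c j else 0).
Proof.
  intros HM H n. rewrite H. rewrite <- (lsum_pad _ N M HM). apply lsum_ext. intros j _.
  destruct (Nat.ltb j N); ring.
Qed.

Lemma inW_repr y : inW y -> exists N c, repr y N c.
Proof.
  intros H. induction H.
  - exists 0%nat, (fun _ => 0). intros n. reflexivity.
  - exists (k - 1)%nat, (fun j => if Nat.eqb j (k - 2) then c else 0). intros n.
    rewrite (lsum_ext _ (fun j => if Nat.eqb j (k - 2) then c * vk k n else 0)).
    + rewrite lsum_single. assert (Nat.ltb (k - 2) (k - 1) = true) by (apply Nat.ltb_lt; lia). rewrite H0. reflexivity.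
    + intros j _. destruct (Nat.eqb j (k - 2)) eqn:E. apply Nat.eqb_eq in E. subst j.
      replace (k - 2 + 2)%nat with k by lia. reflexivity. ring.
  - destruct IHinW1 as [N1 [c1 H1]]. destruct IHinW2 as [N2 [c2 H2]].
    exists (N1 + N2)%nat, (fun j => (if Nat.ltb j N1 then c1 j else 0) + (if Nat.ltb j N2 then c2 j else 0)).
    intros n. rewrite (repr_pad x N1 c1 (N1 + N2) ltac:(lia) H1 n).
    rewrite (repr_pad y N2 c2 (N1 + N2) ltac:(lia) H2 n). rewrite <- lsum_plus.
    apply lsum_ext. intros; ring.
Qed.


From Coquelicot Require Import Coquelicot.
Import Pilot.Defs.
Open Scope R_scope.
Lemma radius_ge1 (a : nat -> R) :
  (forall r, 0 <= r < 1 -> exists M, forall n, Rabs (a n * r ^ n) <= M) ->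
  forall x, Rabs x < 1 -> Rbar_lt (Rabs x) (CV_radius a).
Proof.
  intros H x Hx.
  assert (Hr : 0 <= (Rabs x + 1)/2 < 1) by (pose proof (Rabs_pos x); lra).
  destruct (CV_radius_bounded a) as [Hub _].
  assert (Hle : Rbar_le (Finite ((Rabs x + 1)/2)) (CV_radius a)).
  { apply Hub. apply H; exact Hr. }
  eapply Rbar_lt_le_trans; [|exact Hle]. simpl. lra.
Qed.

Definition lser (n : nat) : R := match n with O => 0 | _ => / INR n end.

Lemma lser_radius x : Rabs x < 1 -> Rbar_lt (Rabs x) (CV_radius lser).
Proof.
  apply radius_ge1. intros r Hr. exists 1. intros n.
  rewrite Rabs_mult. rewrite <- RPow_abs.
  assert (H1 : Rabs (lser n) <= 1).
  { destruct n as [|n]. simpl. rewrite Rabs_R0; lra.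
    change (lser (S n)) with (/ INR (S n)).
    rewrite Rabs_inv. rewrite Rabs_pos_eq by (apply pos_INR).
    rewrite <- Rinv_1. apply Rinv_le_contravar; [lra|]. rewrite S_INR. pose proof (pos_INR n); lra. }
  assert (H2 : 0 <= Rabs r ^ n <= 1).
  { split. apply pow_le, Rabs_pos. rewrite <- (pow1 n). apply pow_incr.
    rewrite Rabs_pos_eq by lra. lra. }
  assert (0 <= Rabs (lser n)) by apply Rabs_pos.
  nra.
Qed.

Lemma PSeries_one x : Rabs x < 1 -> PSeries (fun _ => 1) x = / (1 - x).
Proof.
  intros Hx. apply is_pseries_unique. apply is_pseries_R.
  eapply is_series_ext; [|apply is_series_geom; exact Hx].
  intros n; simpl; ring.
Qed.

Lemma lser_ln t : Rabs t < 1 -> PSeries lser t = - ln (1 - t).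
Proof.
  intros Ht.
  set (r := (Rabs t + 1)/2).
  assert (Hr0 : Rabs t < r < 1) by (unfold r; pose proof (Rabs_pos t); lra).
  pose proof (Rabs_pos t).
  assert (Hin : forall x, -r <= x <= r -> Rabs x < 1).
  { intros x Hx. apply Rabs_def1; lra. }
  assert (Hg : forall x, Rabs x < 1 -> is_derive (fun y => - ln (1 - y)) x (/ (1 - x))).
  { intros x Hx. assert (1 - x > 0) by (apply Rabs_def2 in Hx; lra).
    auto_derive. lra. field. lra. }
  destruct (fn_eq_Derive_eq (PSeries lser) (fun y => - ln (1 - y)) (-r) r) as [C HC].
  - apply PSeries_continuity. apply lser_radius, Hin; lra.
  - apply PSeries_continuity. apply lser_radius, Hin; lra.
  - apply continuity_pt_filterlim. apply (ex_derive_continuous (K:=R_AbsRing) (V:=R_NormedModule) (fun y => - ln (1 - y))). eexists; apply Hg, Hin; lra.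
  - apply continuity_pt_filterlim. apply (ex_derive_continuous (K:=R_AbsRing) (V:=R_NormedModule) (fun y => - ln (1 - y))). eexists; apply Hg, Hin; lra.
  - intros x Hx. apply ex_derive_PSeries, lser_radius, Hin; lra.
  - intros x Hx. eexists; apply Hg, Hin; lra.
  - intros x Hx. rewrite Derive_PSeries by (apply lser_radius, Hin; lra).
    rewrite (is_derive_unique (fun y : R => - ln (1 - y)) _ _ (Hg x (Hin x ltac:(lra)))).
    rewrite <- PSeries_one by (apply Hin; lra).
    apply PSeries_ext. intros n. unfold PS_derive. change (lser (S n)) with (/ INR (S n)).
    field. apply not_0_INR. lia.
  - assert (H0 := HC 0 ltac:(lra)). rewrite PSeries_0 in H0. simpl lser in H0.
    rewrite Rminus_0_r, ln_1 in H0. 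
    rewrite (HC t). lra.
    pose proof (Rle_abs t); pose proof (Rle_abs (-t)); rewrite Rabs_Ropp in *; lra.
Qed.

Lemma lser_sum t : Rabs t < 1 -> Un_cv (sum_f_R0 (fun n => lser n * t ^ n)) (- ln (1 - t)).
Proof.
  intros Ht. rewrite <- lser_ln by exact Ht.
  change (infinite_sum (fun n => lser n * t ^ n) (PSeries lser t)).
  apply is_series_Reals. apply is_pseries_R.
  apply PSeries_correct. apply CV_radius_inside. apply lser_radius. exact Ht.
Qed.

Lemma vk_series (k : nat) t : (k > 0)%nat -> Rabs t < 1 ->
  Un_cv (sum_f_R0 (fun n => vk k n * t ^ n)) (ln (1 - t ^ k) - ln (1 - t) - ln (INR k)).
Proof.
  intros Hk Ht.
  set (A := fun n : nat => if Nat.eqb n 0 then - ln (INR k) else 0).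
  set (C := fun n : nat => if Nat.eqb n 0 then 0 else
                            if Nat.eqb (n mod k) 0 then INR k / INR n * t ^ n else 0).
  assert (HA : Un_cv (sum_f_R0 A) (- ln (INR k))).
  { intros eps He. exists 0%nat. intros n _. 
    replace (sum_f_R0 A n) with (- ln (INR k)). unfold Rdist. rewrite Rminus_diag, Rabs_R0. lra.
    induction n as [|n IH]. reflexivity. simpl. rewrite <- IH. unfold A. simpl. ring. }
  assert (HC : Un_cv (sum_f_R0 C) (- ln (1 - t ^ k))).
  { eapply Un_cv_ext. intros N. symmetry. apply (sum_mult k C Hk).
    { intros n Hn. unfold C. destruct (Nat.eqb n 0); [reflexivity|].
      apply Nat.eqb_neq in Hn. rewrite Hn. reflexivity. }
    apply (Un_cv_div (sum_f_R0 (fun m => C (k * m)%nat))); [exact Hk|].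
    eapply Un_cv_ext; [|apply lser_sum, pow_abs_lt1; auto].
    intros N. apply sum_eq. intros m _. unfold C.
    destruct m as [|m].
    - rewrite Nat.mul_0_r. simpl. ring.
    - assert (E1 : Nat.eqb (k * S m) 0 = false) by (apply Nat.eqb_neq; lia).
      assert (E2 : Nat.eqb ((k * S m) mod k) 0 = true).
      { apply Nat.eqb_eq. rewrite Nat.mul_comm. apply Nat.Div0.mod_mul. }
      rewrite E1, E2. change (lser (S m)) with (/ INR (S m)).
      rewrite <- pow_mult. rewrite mult_INR. field.
      split; apply not_0_INR; lia. }
  assert (HB := lser_sum t Ht).
  assert (H := CV_minus _ _ _ _ (CV_plus _ _ _ _ HA HB) HC).
  eapply Un_cv_ext; [|
    replace (ln (1 - t ^ k) - ln (1 - t) - ln (INR k)) with (- ln (INR k) + - ln (1 - t) - - ln (1 - t ^ k)) by ring;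
    exact H].
  intros N. cbv beta. rewrite <- plus_sum, <- minus_sum. symmetry. apply sum_eq. intros n _.
  unfold A, C, vk. destruct (Nat.eqb n 0) eqn:E0.
  - apply Nat.eqb_eq in E0. subst n. simpl. ring.
  - apply Nat.eqb_neq in E0. destruct n as [|n]; [lia|]. change (lser (S n)) with (/ INR (S n)).
    destruct (Nat.eqb (S n mod k) 0); ring.
Qed.


Lemma terms_bounded (s : nat -> R) l : infinite_sum s l -> exists M, forall n, Rabs (s n) <= M.
Proof.
  intros H. destruct (bounded_cv (sum_f_R0 s) l H) as [M HM].
  exists (2 * M). intros [|n].
  - specialize (HM 0%nat). simpl in HM. pose proof (Rabs_pos (s 0%nat)). lra.
  - replace (s (S n)) with (sum_f_R0 s (S n) - sum_f_R0 s n) by (simpl; ring).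
    eapply Rle_trans; [apply Rabs_triang|]. rewrite Rabs_Ropp.
    pose proof (HM (S n)). pose proof (HM n). lra.
Qed.

Lemma series_radius (a : nat -> R) (f : R -> R) :
  (forall x, Rabs x < 1 -> infinite_sum (fun n => a n * x ^ n) (f x)) ->
  forall x, Rabs x < 1 -> Rbar_lt (Rabs x) (CV_radius a).
Proof.
  intros H. apply radius_ge1. intros r Hr. apply (terms_bounded _ (f r)). apply H.
  rewrite Rabs_pos_eq; lra.
Qed.

Lemma series_PSeries (a : nat -> R) x l :
  infinite_sum (fun n => a n * x ^ n) l -> PSeries a x = l.
Proof.
  intros H. apply is_pseries_unique. apply is_pseries_R. apply is_series_Reals. exact H.
Qed.

Lemma pseries_unique (a c : nat -> R) (f : R -> R) :
  (forall x, Rabs x < 1 -> infinite_sum (fun n => a n * x ^ n) (f x)) ->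
  (forall x, Rabs x < 1 -> infinite_sum (fun n => c n * x ^ n) (f x)) ->
  forall n, a n = c n.
Proof.
  intros Ha Hc n. apply PSeries_ext_recip.
  - eapply Rbar_le_lt_trans; [|apply (series_radius a f Ha 0)]. rewrite Rabs_R0. apply Rbar_le_refl.
    rewrite Rabs_R0; lra.
  - eapply Rbar_le_lt_trans; [|apply (series_radius c f Hc 0)]. rewrite Rabs_R0. apply Rbar_le_refl.
    rewrite Rabs_R0; lra.
  - assert (Hp : 0 < 1/2) by lra. exists (mkposreal _ Hp). intros y Hy.
    change (Rabs (y - 0) < 1/2) in Hy. rewrite Rminus_0_r in Hy.
    rewrite (series_PSeries a y (f y)) by (apply Ha; lra).
    rewrite (series_PSeries c y (f y)) by (apply Hc; lra). reflexivity.
Qed.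

Lemma Cpow_real t n : Cpow (t, 0) n = (t ^ n, 0).
Proof.
  induction n as [|n IH]; simpl. reflexivity.
  rewrite IH. unfold Cmul; simpl. f_equal; ring.
Qed.

Lemma CLog_pos x y : 0 < x -> y = 0 -> CLog (x, y) = (ln x, 0).
Proof.
  intros Hx Hy. subst y. unfold CLog, Cmod, Cnorm2, Arg; simpl.
  f_equal.
  - f_equal. replace (x * x + 0 * 0) with (Rsqr x) by (unfold Rsqr; ring).
    apply sqrt_Rsqr. lra.
  - destruct (Rlt_dec 0 x); [|lra]. unfold Rdiv. rewrite Rmult_0_l. apply atan_0.
Qed.

Lemma IminusS_real k t : (k > 0)%nat -> Rabs t < 1 ->
  IminusS_hk k (t, 0) = (ln (1 - t ^ k) - ln (1 - t) - ln (INR k), 0).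
Proof.
  intros Hk Ht. unfold IminusS_hk. rewrite Cpow_real.
  assert (H1 : Rabs (t ^ k) < 1) by (apply pow_abs_lt1; auto).
  apply Rabs_def2 in H1. apply Rabs_def2 in Ht as Ht'.
  assert (E1 : Csub Defs.C1 (t ^ k, 0) = (1 - t ^ k, 0)) by (unfold Csub, Cadd, Defs.Copp, Defs.C1; simpl; f_equal; ring).
  assert (E2 : Csub Defs.C1 (t, 0) = (1 - t, 0)) by (unfold Csub, Cadd, Defs.Copp, Defs.C1; simpl; f_equal; ring).
  rewrite E1, E2. rewrite (CLog_pos (1 - t ^ k) 0) by (auto; lra).
  rewrite (CLog_pos (1 - t) 0) by (auto; lra).
  unfold Csub, Cadd, Defs.Copp, Defs.RtoC. simpl. f_equal; ring.
Qed.

Lemma b_ident (b : nat -> nat -> Cx)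
  (Hb : forall k : nat, (2 <= k)%nat -> taylor_coeffs (IminusS_hk k) (b k)) :
  forall k n, (2 <= k)%nat -> b k n = (vk k n, 0).
Proof.
  intros k n Hk.
  assert (HT : forall t, Rabs t < 1 ->
     infinite_sum (fun n => fst (b k n) * t ^ n) (ln (1 - t ^ k) - ln (1 - t) - ln (INR k)) /\
     infinite_sum (fun n => snd (b k n) * t ^ n) 0).
  { intros t Ht. assert (HD : inD (t, 0)).
    { unfold inD, Cnorm2; simpl. apply Rabs_def2 in Ht. nra. }
    destruct (Hb k Hk (t, 0) HD) as [H1 H2].
    rewrite IminusS_real in H1, H2 by (auto; lia). simpl in H1, H2.
    split.
    - eapply Un_cv_ext; [|exact H1]. intros N. apply sum_eq. intros i _.
      rewrite Cpow_real. unfold Cmul; simpl. ring.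
    - eapply Un_cv_ext; [|exact H2]. intros N. apply sum_eq. intros i _.
      rewrite Cpow_real. unfold Cmul; simpl. ring. }
  destruct (b k n) eqn:E. f_equal.
  - change r with (fst (r, r0)). rewrite <- E.
    apply (pseries_unique (fun n => fst (b k n)) (vk k)
             (fun t => ln (1 - t ^ k) - ln (1 - t) - ln (INR k))).
    + intros x Hx. apply HT, Hx.
    + intros x Hx. apply vk_series; auto; lia.
  - change r0 with (snd (r, r0)). rewrite <- E.
    apply (pseries_unique (fun n => snd (b k n)) (fun _ => 0) (fun _ => 0)).
    + intros x Hx. apply HT, Hx.
    + intros x Hx. intros eps He. exists 0%nat. intros m _.
      replace (sum_f_R0 (fun n => 0 * x ^ n) m) with 0.
      unfold Rdist. rewrite Rminus_diag, Rabs_R0. lra.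
      induction m; simpl; [ring|]. rewrite <- IHm. ring.
Qed.


Lemma Csum_fst (g : nat -> Cx) N : fst (Csum g N) = lsum (fun j => fst (g j)) N.
Proof. induction N; simpl; [reflexivity|]. rewrite IHN. reflexivity. Qed.
Lemma Csum_snd (g : nat -> Cx) N : snd (Csum g N) = lsum (fun j => snd (g j)) N.
Proof. induction N; simpl; [reflexivity|]. rewrite IHN. reflexivity. Qed.

Lemma cv_le (u : nat -> R) l B : Un_cv u l -> (forall n, u n <= B) -> l <= B.
Proof.
  intros H HB. destruct (Rle_lt_dec l B) as [|Hlt]; auto. exfalso.
  destruct (H (l - B)) as [N HN]. lra. specialize (HN N (Nat.le_refl _)). specialize (HB N).
  unfold Rdist in HN. apply Rabs_def2 in HN. lra.
Qed.

Lemma cv_ge (u : nat -> R) l B : Un_cv u l -> (forall n, B <= u n) -> B <= l.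
Proof.
  intros H HB. destruct (Rle_lt_dec B l) as [|Hlt]; auto. exfalso.
  destruct (H (B - l)) as [N HN]. lra. specialize (HN N (Nat.le_refl _)). specialize (HB N).
  unfold Rdist in HN. apply Rabs_def2 in HN. lra.
Qed.

Theorem mainTheorem9 (b : nat -> nat -> Cx)
  (Hb : forall k : nat, (2 <= k)%nat -> taylor_coeffs (IminusS_hk k) (b k)) :
  forall a : nat -> Cx, inH2 a ->
  forall eps : R, 0 < eps ->
  exists (N : nat) (c : nat -> Cx) (L : R),
    infinite_sum
      (fun n => Cnorm2 (Csub (a n) (Csum (fun j => Cmul (c j) (b (j + 2)%nat n)) N))) L
    /\ sqrt L < eps.
Proof.
  intros a [La HLa] eps He.
  assert (A1 : A (fun n => fst (a n))).
  { apply (dense_real _ (fun n => Cnorm2 (a n)) La); auto. intros n. unfold Cnorm2.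
    pose proof (Rle_0_sqr (snd (a n))). unfold Rsqr in H. lra. }
  assert (A2 : A (fun n => snd (a n))).
  { apply (dense_real _ (fun n => Cnorm2 (a n)) La); auto. intros n. unfold Cnorm2.
    pose proof (Rle_0_sqr (fst (a n))). unfold Rsqr in H. lra. }
  destruct (A1 (eps / 2) ltac:(lra)) as [y1 [Hy1 B1]].
  destruct (A2 (eps / 2) ltac:(lra)) as [y2 [Hy2 B2]].
  destruct (inW_repr y1 Hy1) as [N1 [c1 R1]].
  destruct (inW_repr y2 Hy2) as [N2 [c2 R2]].
  pose proof (repr_pad y1 N1 c1 (N1 + N2) ltac:(lia) R1) as R1'.
  pose proof (repr_pad y2 N2 c2 (N1 + N2) ltac:(lia) R2) as R2'.
  set (d1 := fun j => if Nat.ltb j N1 then c1 j else 0) in *.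
  set (d2 := fun j => if Nat.ltb j N2 then c2 j else 0) in *.
  set (F := fun n => Cnorm2 (Csub (a n) (Csum (fun j => Cmul (d1 j, d2 j) (b (j + 2)%nat n)) (N1 + N2)))).
  assert (HF : forall n, F n = (fst (a n) - y1 n) * (fst (a n) - y1 n) + (snd (a n) - y2 n) * (snd (a n) - y2 n)).
  { intros n. unfold F, Cnorm2, Csub, Cadd, Copp. simpl. rewrite Csum_fst, Csum_snd.
    rewrite R1', R2'.
    rewrite (lsum_ext _ (fun j => d1 j * vk (j + 2) n)).
    rewrite (lsum_ext (fun j => snd (Cmul (d1 j, d2 j) (b (j + 2)%nat n))) (fun j => d2 j * vk (j + 2) n)).
    ring.
    - intros j _. rewrite (b_ident b Hb (j + 2) n) by lia. unfold Cmul; simpl. ring.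
    - intros j _. rewrite (b_ident b Hb (j + 2) n) by lia. unfold Cmul; simpl. ring. }
  assert (Hbound : forall N, sum_f_R0 F N <= eps * eps / 2).
  { intros N. rewrite (sum_eq _ _ N (fun n _ => HF n)). rewrite plus_sum.
    specialize (B1 N). specialize (B2 N). cbv beta in B1, B2. lra. }
  assert (Hpos : forall n, 0 <= F n).
  { intros n. rewrite HF. pose proof (Rle_0_sqr (fst (a n) - y1 n)). pose proof (Rle_0_sqr (snd (a n) - y2 n)).
    unfold Rsqr in *. lra. }
  destruct (Un_cv_crit (sum_f_R0 F)) as [L HL].
  { intros n. simpl. pose proof (Hpos (S n)). lra. }
  { exists (eps * eps / 2). intros x [i ->]. apply Hbound. }
  exists (N1 + N2)%nat, (fun j => (d1 j, d2 j)), L. split.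
  - exact HL.
  - assert (HL1 : L <= eps * eps / 2) by (apply (cv_le _ _ _ HL Hbound)).
    assert (HL0 : 0 <= L) by (apply (cv_ge _ _ _ HL); intros; apply sum_nonneg; auto).
    rewrite <- (sqrt_square eps) by lra. apply sqrt_lt_1_alt. nra.
Qed.
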